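(* Let $\mathcal{L}$ be a family of oriented balanced algebraic laws. Assume that for all $f,g$ in the positive geometry monoid $\mathcal{G}^+(\mathcal{L})$ there exist $f',g'\in\mathcal{G}^+(\mathcal{L})$ with $f\bullet g'=g\bullet f'$ and such that the domain of $f\bullet g'$ is the intersection of the domains of $f$ and $g$. Then the rewrite system $R^+_{\mathcal{L}}$ is confluent.
   Context: Terms over a signature $\Sigma$ and an infinite set of variables; addresses are finite sequences of positive integers, $t/\alpha$ the subterm at $\alpha$. A law is balanced if both sides contain the same variables. For an oriented law $L=(l,r)$ and an address $\alpha$, $O^+_{L,\alpha}$ is the partial map sending $t$ with $t/\alpha=l\sigma$ (for a substitution $\sigma$) to the term obtained by replacing that subterm by $r\sigma$. Operators act on the right and $f\bullet g$ means ''$f$ then $g$''. $\mathcal{G}^+(\mathcal{L})$ is the monoid of partial maps generated by all $O^+_{L,\alpha}$, $L\in\mathcal{L}$, $\alpha$ any address. $R^+_{\mathcal{L}}$ is the rewrite system with rules $l\to r$ for $(l,r)\in\mathcal{L}$ (applied to substitution instances in arbitrary subterms); writing $t\to^* t'$ when $t$ rewrites to $t'$ in finitely many (possibly zero) steps, $R^+_{\mathcal{L}}$ is confluent if whenever $t\to^*t'$ and $t\to^*t''$ there is $t'''$ with $t'\to^*t'''$ and $t''\to^*t'''$. *)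

(* Defs.v *)
From Stdlib Require Import List Relations.
Import ListNotations.
Set Implicit Arguments.

Section Terms.
Variables (F V : Type) (arity : F -> nat).

(** Raw terms; the terms over the signature are those satisfying [wf]. *)
Inductive term : Type :=
| Var : V -> term
| App : F -> list term -> term.

Inductive wf : term -> Prop :=
| wf_var x : wf (Var x)
| wf_app f ts : length ts = arity f -> Forall wf ts -> wf (App f ts).

Fixpoint vars (t : term) : list V :=
  match t with
  | Var x => [x]
  | App _ ts => flat_map vars ts
  end.

Fixpoint subst (s : V -> term) (t : term) : term :=
  match t with
  | Var x => s x
  | App f ts => App f (map (subst s) ts)
  end.

(** Addresses: lists of positive integers (index 1 = first argument). *)
Definition address := list nat.

Fixpoint subterm (t : term) (a : address) : option term :=
  match a with
  | [] => Some t
  | i :: a' =>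
      match t with
      | Var _ => None
      | App _ ts =>
          match i with
          | 0 => None
          | S j => match nth_error ts j with
                   | Some s => subterm s a'
                   | None => None
                   end
          end
      end
  end.

Fixpoint update_nth {A} (n : nat) (g : A -> A) (l : list A) : list A :=
  match l, n with
  | [], _ => []
  | x :: l', 0 => g x :: l'
  | x :: l', S n' => x :: update_nth n' g l'
  end.

Fixpoint replace (t : term) (a : address) (u : term) : term :=
  match a with
  | [] => u
  | i :: a' =>
      match t with
      | Var _ => t
      | App f ts => App f (update_nth (pred i) (fun s => replace s a' u) ts)
      end
  end.

Definition law := (term * term)%type.

Definition balanced (L : law) : Prop :=
  forall x, In x (vars (fst L)) <-> In x (vars (snd L)).

(** Partial maps on terms, represented by their (functional) graphs. *)
Definition pmap := term -> term -> Prop.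

(** f • g : "f then g". *)
Definition pcomp (f g : pmap) : pmap :=
  fun t t'' => exists t', f t t' /\ g t' t''.

Definition pdom (f : pmap) (t : term) : Prop := exists t', f t t'.

Definition peq (f g : pmap) : Prop := forall t t', f t t' <-> g t t'.

Definition pid : pmap := fun t t' => wf t /\ t' = t.

Definition Oplus (L : law) (a : address) : pmap :=
  fun t t' => wf t /\ exists s : V -> term,
      subterm t a = Some (subst s (fst L)) /\ t' = replace t a (subst s (snd L)).

Inductive inGplus (Ls : law -> Prop) : pmap -> Prop :=
| inG_id : inGplus Ls pid
| inG_cons L a g : Ls L -> inGplus Ls g -> inGplus Ls (pcomp (Oplus L a) g).

Definition rstep (Ls : law -> Prop) : term -> term -> Prop :=
  fun t t' => exists L a, Ls L /\ Oplus L a t t'.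

Definition confluent (R : term -> term -> Prop) : Prop :=
  forall t t1 t2, clos_refl_trans _ R t t1 -> clos_refl_trans _ R t t2 ->
    exists t3, clos_refl_trans _ R t1 t3 /\ clos_refl_trans _ R t2 t3.

End Terms.

(* Main.v *)
Require Import Defs.
From Stdlib Require Import List Relations.
Import ListNotations.
Set Implicit Arguments.

Section Aux.
Variables (F V : Type) (arity : F -> nat).
Implicit Types (t u v w : term F V) (s : V -> term F V) (ts : list (term F V)).

Definition term_ind' (P : term F V -> Prop)
  (HV : forall x, P (Var F x))
  (HA : forall f ts, Forall P ts -> P (App f ts)) : forall t, P t :=
  fix go t := match t with
  | Var _ x => HV x
  | App f ts => HA f ts ((fix gol l : Forall P l := match l with
       | [] => Forall_nil P
       | u :: l' => Forall_cons u (go u) (gol l') end) ts)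
  end.

Lemma wf_App_inv f (ts : list (term F V)) : wf arity (App f ts) -> length ts = arity f /\ Forall (wf arity) ts.
Proof. intro H; inversion H; auto. Qed.

Lemma wf_subst_inv : forall t s, wf arity (subst s t) -> forall x, In x (vars t) -> wf arity (s x).
Proof.
  induction t as [y|f ts IH] using term_ind'; simpl; intros s Hw x Hx.
  - destruct Hx as [<-|[]]; auto.
  - apply wf_App_inv in Hw as [_ Hw].
    apply in_flat_map in Hx as [u [Hu Hx]].
    rewrite Forall_forall in IH, Hw.
    apply (IH u Hu s); auto. apply Hw. apply in_map; auto.
Qed.

Lemma wf_subst : forall t s, wf arity t -> (forall x, In x (vars t) -> wf arity (s x)) -> wf arity (subst s t).
Proof.
  induction t as [y|f ts IH] using term_ind'; simpl; intros s Hw Hs.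
  - apply Hs; auto.
  - apply wf_App_inv in Hw as [Hl Hw]. constructor.
    + rewrite length_map; auto.
    + rewrite Forall_forall in *. intros v Hv. apply in_map_iff in Hv as [u [<- Hu]].
      apply IH; auto. intros x Hx; apply Hs, in_flat_map; eauto.
Qed.

Lemma subst_inj_vars : forall t (s s' : V -> term F V), subst s t = subst s' t -> forall x, In x (vars t) -> s x = s' x.
Proof.
  induction t as [y|f ts IH] using term_ind'; simpl; intros s s' He x Hx.
  - destruct Hx as [<-|[]]; auto.
  - injection He as He. apply in_flat_map in Hx as [u [Hu Hx]].
    rewrite Forall_forall in IH. apply (IH u Hu); auto.
    clear -He Hu. induction ts; simpl in *; [contradiction|].
    injection He as E1 E2. destruct Hu as [<-|Hu]; auto.
Qed.

Lemma subst_ext : forall t (s s' : V -> term F V), (forall x, In x (vars t) -> s x = s' x) -> subst s t = subst s' t.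
Proof.
  induction t as [y|f ts IH] using term_ind'; simpl; intros s s' He.
  - apply He; auto.
  - f_equal. apply map_ext_in. intros u Hu. rewrite Forall_forall in IH.
    apply IH; auto. intros x Hx; apply He, in_flat_map; eauto.
Qed.

Lemma update_nth_length {A} n (g : A -> A) l : length (update_nth n g l) = length l.
Proof. revert n; induction l; destruct n; simpl; auto. Qed.

Lemma update_nth_Forall {A} (P : A -> Prop) n g l : Forall P l ->
  (forall x, nth_error l n = Some x -> P (g x)) -> Forall P (update_nth n g l).
Proof.
  revert n; induction l; intros n HF Hg; destruct n; simpl in *; auto;
  inversion HF; subst; constructor; auto.
Qed.

Lemma wf_replace : forall a t v u, wf arity t -> subterm t a = Some v -> wf arity u ->
  wf arity (replace t a u).
Proof.
  induction a as [|i a IH]; simpl; intros t v u Ht Hs Hu; auto.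
  destruct t as [x|f ts]; [discriminate|].
  destruct i as [|j]; [discriminate|]. simpl.
  destruct (nth_error ts j) as [w|] eqn:E; [|discriminate].
  apply wf_App_inv in Ht as [Hl Hw]. constructor.
  - rewrite update_nth_length; auto.
  - apply update_nth_Forall; auto. intros x Ex. rewrite E in Ex. injection Ex as <-.
    apply (IH w v); auto. rewrite Forall_forall in Hw. apply Hw. eapply nth_error_In; eauto.
Qed.

Lemma wf_subterm : forall a t v, wf arity t -> subterm t a = Some v -> wf arity v.
Proof.
  induction a as [|i a IH]; simpl; intros t v Ht Hs.
  - injection Hs as <-; auto.
  - destruct t as [x|f ts]; [discriminate|].
    destruct i as [|j]; [discriminate|].
    destruct (nth_error ts j) as [w|] eqn:E; [|discriminate].
    apply wf_App_inv in Ht as [_ Hw]. apply (IH w); auto.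
    rewrite Forall_forall in Hw. apply Hw. eapply nth_error_In; eauto.
Qed.

Variable Ls : law F V -> Prop.
Hypothesis Ls_laws : forall L, Ls L ->
     wf arity (fst L) /\ wf arity (snd L) /\ balanced L.

Lemma Oplus_wf L a t t' : Ls L -> Oplus arity L a t t' -> wf arity t'.
Proof.
  intros HL [Ht [s [Hs ->]]]. destruct (Ls_laws HL) as [_ [Hr Hb]].
  eapply wf_replace; eauto. apply wf_subst; auto.
  intros x Hx. apply Hb in Hx. apply wf_subst_inv with (t := fst L) (s := s); auto. apply wf_subterm with (a := a) (t := t); auto.
Qed.

Lemma Oplus_fun L a t t1 t2 : Ls L -> Oplus arity L a t t1 -> Oplus arity L a t t2 -> t1 = t2.
Proof.
  intros HL [_ [s [Hs ->]]] [_ [s' [Hs' ->]]]. destruct (Ls_laws HL) as [_ [_ Hb]].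
  rewrite Hs in Hs'. injection Hs' as Hs'. f_equal. apply subst_ext.
  intros x Hx. apply Hb in Hx. eapply subst_inj_vars; eauto.
Qed.

Lemma G_fun f : inGplus arity Ls f -> forall t t1 t2, f t t1 -> f t t2 -> t1 = t2.
Proof.
  induction 1 as [|L a g HL Hg IH]; intros t t1 t2.
  - intros [_ ->] [_ ->]; auto.
  - intros [u [Hu Hg1]] [u' [Hu' Hg2]].
    pose proof (Oplus_fun HL Hu Hu'); subst. eauto.
Qed.

Lemma G_rt f : inGplus arity Ls f -> forall t t1, f t t1 -> clos_refl_trans _ (rstep arity Ls) t t1.
Proof.
  induction 1 as [|L a g HL Hg IH]; intros t t1.
  - intros [_ ->]; apply rt_refl.
  - intros [u [Hu Hg1]]. eapply rt_trans; [apply rt_step; exists L, a; eauto|eauto].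
Qed.

Lemma rt_G : forall t t1, clos_refl_trans_1n _ (rstep arity Ls) t t1 -> wf arity t ->
  exists f, inGplus arity Ls f /\ f t t1.
Proof.
  intros t t1 R; induction R as [t|t y t1 Hs Hr IH]; intros Ht.
  - exists (pid arity). split; [constructor|split; auto].
  - destruct Hs as [L [a [HL Ho]]].
    destruct IH as [g [Hg Hgy]]. eapply Oplus_wf; eauto.
    exists (pcomp (Oplus arity L a) g). split; [constructor; auto|exists y; auto].
Qed.

End Aux.

Theorem proposition5p2 (F V : Type) (arity : F -> nat)
  (V_infinite : forall l : list V, exists x, ~ In x l)
  (Ls : law F V -> Prop)
  (Ls_laws : forall L, Ls L ->
     wf arity (fst L) /\ wf arity (snd L) /\ balanced L)
  (H : forall f g, inGplus arity Ls f -> inGplus arity Ls g ->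
     exists f' g', inGplus arity Ls f' /\ inGplus arity Ls g' /\
       peq (pcomp f g') (pcomp g f') /\
       (forall t, pdom (pcomp f g') t <-> (pdom f t /\ pdom g t))) :
  confluent (rstep arity Ls).
Proof.
  intros t t1 t2 H1 H2.
  apply clos_rt_rt1n in H1. apply clos_rt_rt1n in H2.
  inversion H1 as [|y t1' S1 R1]; subst.
  { exists t2. split; [apply clos_rt1n_rt; auto|apply rt_refl]. }
  assert (Wt : wf arity t) by (destruct S1 as [L [a [_ [W _]]]]; auto).
  pose proof (Rt1 := Relation_Operators.rt1n_trans _ _ _ _ _ S1 R1).
  destruct (rt_G Ls_laws Rt1 Wt) as [f [Hf Ft]].
  destruct (rt_G Ls_laws H2 Wt) as [g [Hg Gt]].
  destruct (H f g Hf Hg) as [f' [g' [Hf' [Hg' [Heq Hdom]]]]].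
  destruct (proj2 (Hdom t)) as [t3 Ht3]; [split; [exists t1|exists t2]; auto|].
  pose proof (Ht3' := proj1 (Heq t t3) Ht3).
  destruct Ht3 as [u [Fu G'u]]. destruct Ht3' as [v [Gv F'v]].
  rewrite (G_fun Ls_laws Hf _ _ _ Fu Ft) in G'u. rewrite (G_fun Ls_laws Hg _ _ _ Gv Gt) in F'v.
  exists t3. split; [apply (G_rt Hg') | apply (G_rt Hf')]; auto.
Qed.
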